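(* Let $\alpha\in\mathbb C$ and define sequences $u(k),v(k),f(k),g(k)$, $k\ge0$, by $u(0)=v(0)=0$, $f(0)=g(0)=1$ (so $u(1)=v(1)=1$) and, for $k\ge1$, $$u(k)=u(k-1)+f(k-1),\quad v(k)=v(k-1)+g(k-1),\quad f(k)=\frac{u(k)}{v(k)}\,g(k-1),\quad g(k)=\frac{\alpha v(k)}{k-\frac{\alpha u(k)}{f(k-1)}-\frac{\alpha v(k)}{g(k-1)}}.$$ (These are the recurrences equivalent to the constraints $\alpha u(k)=k\frac{f(k)g(k)f(k-1)}{f(k)g(k)+g(k)f(k-1)+f(k-1)g(k-1)}$, $\alpha v(k)=k\frac{g(k)f(k-1)g(k-1)}{f(k)g(k)+g(k)f(k-1)+f(k-1)g(k-1)}$ with $f(k)=u(k+1)-u(k)$, $g(k)=v(k+1)-v(k)$.) Then, for all $k$ such that the arguments are nonnegative integers, $$u(3k)=\frac{2k}{k+2\alpha}\Pi_1(k),\quad u(3k+1)=\frac{2k+2\alpha}{k+2\alpha}\Pi_1(k),\quad u(3k+2)=2\Pi_1(k),\quad f(3k-1)=f(3k)=f(3k+1)=\frac{2\alpha}{k+2\alpha}\Pi_1(k),$$ $$v(3k-1)=\frac{k-\alpha}{k+\alpha}\Pi_2(k),\quad v(3k)=\frac{k}{k+\alpha}\Pi_2(k),\quad v(3k+1)=\Pi_2(k),\quad g(3k-2)=g(3k-1)=g(3k)=\frac{\alpha}{k+\alpha}\Pi_2(k),$$ where $$\Pi_1(k)=\prod_{j=1}^k\frac{j+2\alpha}{j-\alpha},\qquad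 \Pi_2(k)=\prod_{j=1}^k\frac{j+\alpha}{j-2\alpha}.$$
   Context: Empty products equal $1$. The parameter $\alpha$ is such that all denominators occurring are nonzero. *)

(* Defs.v *)
From HB Require Import structures.
From mathcomp Require Import all_boot all_order all_algebra.
From mathcomp Require Import complex reals.
Set Implicit Arguments. Unset Strict Implicit. Unset Printing Implicit Defensive.
Import Order.TTheory GRing.Theory Num.Theory.
Local Open Scope ring_scope.
Local Open Scope complex_scope.

Fixpoint seqs (R : realType) (a : R[i]) (k : nat) : R[i] * R[i] * R[i] * R[i] :=
  match k with
  | 0 => (0, 0, 1, 1)
  | k'.+1 =>
      let '(u, v, f, g) := seqs a k' in
      let u' := u + f in
      let v' := v + g in
      (u', v', u' / v' * g, a * v' / (k'.+1%:R - a * u' / f - a * v' / g))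
  end.

Definition useq (R : realType) (a : R[i]) k : R[i] := (seqs a k).1.1.1.
Definition vseq (R : realType) (a : R[i]) k : R[i] := (seqs a k).1.1.2.
Definition fseq (R : realType) (a : R[i]) k : R[i] := (seqs a k).1.2.
Definition gseq (R : realType) (a : R[i]) k : R[i] := (seqs a k).2.

Definition Pi1 (R : realType) (a : R[i]) (k : nat) : R[i] :=
  \prod_(1 <= j < k.+1) ((j%:R + 2 * a) / (j%:R - a)).
Definition Pi2 (R : realType) (a : R[i]) (k : nat) : R[i] :=
  \prod_(1 <= j < k.+1) ((j%:R + a) / (j%:R - 2 * a)).

(* Main.v *)
Require Import Defs.
From HB Require Import structures.
From mathcomp Require Import all_boot all_order all_algebra.
From mathcomp Require Import complex reals.
From mathcomp Require Import ring.
Import Order.TTheory GRing.Theory Num.Theory.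
Local Open Scope ring_scope.

Section S.
Variable R : realType.
Variable a : R[i].

Lemma seqsS n : seqs a n.+1 =
  (useq a n + fseq a n, vseq a n + gseq a n,
   (useq a n + fseq a n) / (vseq a n + gseq a n) * gseq a n,
   a * (vseq a n + gseq a n) / (n.+1%:R - a * (useq a n + fseq a n) / fseq a n
      - a * (vseq a n + gseq a n) / gseq a n)).
Proof. by rewrite /useq /vseq /fseq /gseq /=; case: (seqs a n) => [[[u v] f] g]. Qed.

Lemma useqS n : useq a n.+1 = useq a n + fseq a n.
Proof. by rewrite {1}/useq seqsS. Qed.
Lemma vseqS n : vseq a n.+1 = vseq a n + gseq a n.
Proof. by rewrite {1}/vseq seqsS. Qed.
Lemma fseqS n : fseq a n.+1 = useq a n.+1 / vseq a n.+1 * gseq a n.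
Proof. by rewrite {1}/fseq seqsS useqS vseqS. Qed.
Lemma gseqS n : gseq a n.+1 = a * vseq a n.+1 / (n.+1%:R - a * useq a n.+1 / fseq a n
      - a * vseq a n.+1 / gseq a n).
Proof. by rewrite {1}/gseq seqsS useqS vseqS. Qed.

Ltac fld := field; repeat (apply/andP; split); by [].

Hypothesis ha : a != 0.
Hypothesis hden : forall n : nat,
     [/\ n%:R + a != 0, n%:R + 2 * a != 0, n%:R - a != 0 & n%:R - 2 * a != 0].

Lemma block n k (P Q : R[i]) (hn : n%:R = 3 * k%:R :> R[i]) (hP : P != 0) (hQ : Q != 0) :
  useq a n = 2 * k%:R / (k%:R + 2 * a) * P ->
  vseq a n = k%:R / (k%:R + a) * Q ->
  fseq a n = 2 * a / (k%:R + 2 * a) * P ->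
  gseq a n = a / (k%:R + a) * Q ->
  [/\ useq a n.+1 = (2 * k%:R + 2 * a) / (k%:R + 2 * a) * P,
      vseq a n.+1 = Q,
      fseq a n.+1 = 2 * a / (k%:R + 2 * a) * P &
      gseq a n.+1 = a * Q / (k%:R + 1 - 2 * a)] /\
  [/\ useq a n.+2 = 2 * P,
      vseq a n.+2 = Q * (k%:R + 1 - a) / (k%:R + 1 - 2 * a),
      fseq a n.+2 = 2 * a * P / (k%:R + 1 - a) &
      gseq a n.+2 = a * Q / (k%:R + 1 - 2 * a)] /\
  [/\ useq a n.+3 = 2 * P * (k%:R + 1) / (k%:R + 1 - a),
      vseq a n.+3 = Q * (k%:R + 1) / (k%:R + 1 - 2 * a),
      fseq a n.+3 = 2 * a * P / (k%:R + 1 - a) &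
      gseq a n.+3 = a * Q / (k%:R + 1 - 2 * a)].
Proof.
move=> hu hv hf hg.
have [h1 h2 _ _] := hden k.
have [_ h3 h4 h5] := hden k.+1.
rewrite -natr1 in h3 h4 h5.
have h6 : k%:R + 1 != 0 :> R[i] by rewrite natr1 pnatr_eq0.
have h7 : 2 != 0 :> R[i] by rewrite pnatr_eq0.
have e1 : n.+1%:R = 3 * k%:R + 1 :> R[i] by rewrite -natr1 hn.
have e2 : n.+2%:R = 3 * k%:R + 2 :> R[i] by rewrite -natr1 e1; ring.
have e3 : n.+3%:R = 3 * k%:R + 3 :> R[i] by rewrite -natr1 e2; ring.
have hu1 : useq a n.+1 = (2 * k%:R + 2 * a) / (k%:R + 2 * a) * P.
  by rewrite useqS hu hf; fld.
have hv1 : vseq a n.+1 = Q by rewrite vseqS hv hg; fld.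
have hf1 : fseq a n.+1 = 2 * a / (k%:R + 2 * a) * P.
  by rewrite fseqS hu1 hv1 hg; fld.
have hg1 : gseq a n.+1 = a * Q / (k%:R + 1 - 2 * a).
  rewrite gseqS hu1 hv1 hf hg e1.
  have -> : 3 * k%:R + 1 - a * ((2 * k%:R + 2 * a) / (k%:R + 2 * a) * P) /
     (2 * a / (k%:R + 2 * a) * P) - a * Q / (a / (k%:R + a) * Q) = k%:R + 1 - 2 * a.
    by fld.
  by [].
have hu2 : useq a n.+2 = 2 * P by rewrite useqS hu1 hf1; fld.
have hv2 : vseq a n.+2 = Q * (k%:R + 1 - a) / (k%:R + 1 - 2 * a).
  by rewrite vseqS hv1 hg1; fld.
have hf2 : fseq a n.+2 = 2 * a * P / (k%:R + 1 - a).
  by rewrite fseqS hu2 hv2 hg1; fld.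
have hg2 : gseq a n.+2 = a * Q / (k%:R + 1 - 2 * a).
  rewrite gseqS hu2 hv2 hf1 hg1 e2.
  have -> : 3 * k%:R + 2 - a * (2 * P) / (2 * a / (k%:R + 2 * a) * P) -
     a * (Q * (k%:R + 1 - a) / (k%:R + 1 - 2 * a)) / (a * Q / (k%:R + 1 - 2 * a))
     = k%:R + 1 - a by fld.
  by fld.
have hu3 : useq a n.+3 = 2 * P * (k%:R + 1) / (k%:R + 1 - a).
  by rewrite useqS hu2 hf2; fld.
have hv3 : vseq a n.+3 = Q * (k%:R + 1) / (k%:R + 1 - 2 * a).
  by rewrite vseqS hv2 hg2; fld.
have hf3 : fseq a n.+3 = 2 * a * P / (k%:R + 1 - a).
  by rewrite fseqS hu3 hv3 hg2; fld.
have hg3 : gseq a n.+3 = a * Q / (k%:R + 1 - 2 * a).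
  rewrite gseqS hu3 hv3 hf2 hg2 e3.
  have -> : 3 * k%:R + 3 - a * (2 * P * (k%:R + 1) / (k%:R + 1 - a)) / (2 * a * P / (k%:R + 1 - a)) -
     a * (Q * (k%:R + 1) / (k%:R + 1 - 2 * a)) / (a * Q / (k%:R + 1 - 2 * a))
     = k%:R + 1 by fld.
  by fld.
by [].
Qed.

Lemma Pi1S k : Pi1 a k.+1 = Pi1 a k * ((k.+1%:R + 2 * a) / (k.+1%:R - a)).
Proof. by rewrite /Pi1 big_nat_recr. Qed.
Lemma Pi2S k : Pi2 a k.+1 = Pi2 a k * ((k.+1%:R + a) / (k.+1%:R - 2 * a)).
Proof. by rewrite /Pi2 big_nat_recr. Qed.
Lemma Pi10 : Pi1 a 0 = 1. Proof. by rewrite /Pi1 big_geq. Qed.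
Lemma Pi20 : Pi2 a 0 = 1. Proof. by rewrite /Pi2 big_geq. Qed.

Lemma Pi1_neq0 k : Pi1 a k != 0.
Proof.
elim: k => [|k IH]; first by rewrite Pi10 oner_eq0.
have [_ h1 h2 _] := hden k.+1.
by rewrite Pi1S mulf_neq0 // mulf_neq0 // invr_neq0.
Qed.
Lemma Pi2_neq0 k : Pi2 a k != 0.
Proof.
elim: k => [|k IH]; first by rewrite Pi20 oner_eq0.
have [h1 _ _ h2] := hden k.+1.
by rewrite Pi2S mulf_neq0 // mulf_neq0 // invr_neq0.
Qed.

Lemma main k :
  [/\ useq a (3 * k) = 2 * k%:R / (k%:R + 2 * a) * Pi1 a k,
      vseq a (3 * k) = k%:R / (k%:R + a) * Pi2 a k,
      fseq a (3 * k) = 2 * a / (k%:R + 2 * a) * Pi1 a k &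
      gseq a (3 * k) = a / (k%:R + a) * Pi2 a k].
Proof.
elim: k => [|k [hu hv hf hg]].
  rewrite muln0 Pi10 Pi20 /useq /vseq /fseq /gseq /= !mulr1 !add0r !mul0r mulr0 mul0r.
  split => //; [|by rewrite divff].
  have h7 : 2 != 0 :> R[i] by rewrite pnatr_eq0.
  by rewrite divff // mulf_neq0.
have hn : (3 * k)%:R = 3 * k%:R :> R[i] by rewrite natrM.
have [_ [_ [hu3 hv3 hf3 hg3]]] := block (3 * k) k (Pi1 a k) (Pi2 a k) hn (Pi1_neq0 k) (Pi2_neq0 k) hu hv hf hg.
have -> : (3 * k.+1 = (3 * k).+3)%N by rewrite mulnSr addn3.
have [_ h2 _ _] := hden k.
have [h1 h3 h4 h5] := hden k.+1.
rewrite -natr1 in h1 h3 h4 h5.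
have h6 : k%:R + 1 != 0 :> R[i] by rewrite natr1 pnatr_eq0.
have h7 : 2 != 0 :> R[i] by rewrite pnatr_eq0.
have hP := Pi1_neq0 k. have hQ := Pi2_neq0 k.
rewrite hu3 hv3 hf3 hg3 Pi1S Pi2S -!natr1.
split; fld.
Qed.
End S.

Theorem theorem23 (R : realType) (a : R[i])
  (* all denominators in the recurrence (step k >= 1) are nonzero *)
  (hrec : forall k : nat, (0 < k)%N ->
     [/\ vseq a k != 0, fseq a k.-1 != 0, gseq a k.-1 != 0 &
         k%:R - a * useq a k / fseq a k.-1 - a * vseq a k / gseq a k.-1 != 0])
  (* all denominators in the closed formulas are nonzero *)
  (hden : forall n : nat,
     [/\ n%:R + a != 0, n%:R + 2 * a != 0, n%:R - a != 0 & n%:R - 2 * a != 0]) :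
  (forall k : nat,
     [/\ useq a (3 * k) = (2 * k%:R) / (k%:R + 2 * a) * Pi1 a k,
         useq a (3 * k + 1) = (2 * k%:R + 2 * a) / (k%:R + 2 * a) * Pi1 a k,
         useq a (3 * k + 2) = 2 * Pi1 a k,
         fseq a (3 * k) = (2 * a) / (k%:R + 2 * a) * Pi1 a k &
         fseq a (3 * k + 1) = (2 * a) / (k%:R + 2 * a) * Pi1 a k] /\
     [/\ vseq a (3 * k) = k%:R / (k%:R + a) * Pi2 a k,
         vseq a (3 * k + 1) = Pi2 a k &
         gseq a (3 * k) = a / (k%:R + a) * Pi2 a k]) /\
  (forall k : nat, (0 < k)%N ->
     [/\ fseq a (3 * k - 1) = (2 * a) / (k%:R + 2 * a) * Pi1 a k,
         vseq a (3 * k - 1) = (k%:R - a) / (k%:R + a) * Pi2 a k,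
         gseq a (3 * k - 2) = a / (k%:R + a) * Pi2 a k &
         gseq a (3 * k - 1) = a / (k%:R + a) * Pi2 a k]).
Proof.
have ha : a != 0.
  have [_ _ + _] := hrec 2%N isT.
  by apply: contraNneq => ->; rewrite /gseq /= !mul0r.
have blk (k : nat) := @block R a ha hden (3 * k) k (Pi1 a k) (Pi2 a k) (natrM _ 3 k)
   (@Pi1_neq0 R a hden k) (@Pi2_neq0 R a hden k).
have h7 : 2 != 0 :> R[i] by rewrite pnatr_eq0.
split.
  move=> k.
  have [hu hv hf hg] := @main R a ha hden k.
  have [[hu1 hv1 hf1 hg1] [[hu2 hv2 hf2 hg2] _]] := blk k hu hv hf hg.
  by rewrite addn1 addn2 hu1 hu2 hf1 hv1; split.
case=> [//|m] _.
have [hu hv hf hg] := @main R a ha hden m.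
have [[hu1 hv1 hf1 hg1] [[hu2 hv2 hf2 hg2] _]] := blk m hu hv hf hg.
have -> : (3 * m.+1 - 1 = (3 * m).+2)%N by rewrite mulnSr addn3 subn1.
have -> : (3 * m.+1 - 2 = (3 * m).+1)%N by rewrite mulnSr addn3 subn2.
have [_ h2 _ _] := hden m.
have [h1 h3 h4 h5] := hden m.+1.
rewrite -natr1 in h1 h3 h4 h5.
have hP := @Pi1_neq0 R a hden m. have hQ := @Pi2_neq0 R a hden m.
rewrite hf2 hv2 hg1 hg2 Pi1S Pi2S -!natr1.
split; field; repeat (apply/andP; split); by [].
Qed.
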